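(* Let $\mathcal{G}_n$ be the set of binary words of length $2n$ with $n$ zeros and $n$ ones. For integers $k,\ell\ge0$, the number of words in $\mathcal{G}_n$ with exactly $k$ occurrences of $001$ (as consecutive subword) equals $$\binom{n}{2k}\binom{2k}{k}2^{n-2k},$$ and the number of words in $\mathcal{G}_n$ with exactly $k$ occurrences of $001$ and exactly $\ell$ occurrences of $01$ (as consecutive subwords) equals $$\binom{n}{2k}\binom{2k}{k}\binom{n-2k}{\ell-k},$$ which, when $k\le\ell\le n-k$, equals $\dfrac{n!}{k!^2(\ell-k)!(n-k-\ell)!}$.
   Context: Binomial coefficients $\binom{a}{b}$ are $0$ when $b<0$ or $b>a$. *)

(* Defs.v *)
From mathcomp Require Import all_boot all_order all_algebra.
Set Implicit Arguments. Unset Strict Implicit. Unset Printing Implicit Defensive.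

(* Binary words: false = 0, true = 1. *)

Definition occ (w p : seq bool) : nat :=
  count (fun i => take (size p) (drop i w) == p) (iota 0 (size w)).

Definition inG (n : nat) (w : (2 * n).-tuple bool) : bool :=
  (count_mem false w == n) && (count_mem true w == n).

Definition binz (a b : int) : nat :=
  match a, b with
  | Posz a', Posz b' => 'C(a', b')
  | _, _ => 0
  end.

(* Main.v *)
Require Import Defs.
From mathcomp Require Import all_boot all_order all_algebra.
From mathcomp Require Import zify ring.
Set Implicit Arguments. Unset Strict Implicit. Unset Printing Implicit Defensive.


Fixpoint allw m : seq (seq bool) :=
  if m is m'.+1 then map (cons false) (allw m') ++ map (cons true) (allw m')
  else [:: [::]].

Lemma allwP m s : (s \in allw m) = (size s == m).
Proof.
elim: m s => [|m IH] [|x s] //=.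
- by rewrite mem_cat; apply/negbTE; rewrite negb_or; apply/andP; split;
    apply/mapP => -[].
- rewrite mem_cat eqSS -IH; case: x.
  + apply/idP/idP => [/orP[/mapP[y Hy [_ ->]]|/mapP[y Hy [->]]] //|H].
    by apply/orP; right; apply/map_f.
  + apply/idP/idP => [/orP[/mapP[y Hy [->]]|/mapP[y Hy [_ ->]]] //|H].
    by apply/orP; left; apply/map_f.
Qed.

Lemma allw_uniq m : uniq (allw m).
Proof.
elim: m => [|m IH] //=.
have ci b : injective (@cons bool b) by move=> ? ? [].
rewrite cat_uniq !map_inj_uniq //.
rewrite IH /= andbT; apply/hasPn => s /mapP[y _ ->]; by apply/mapP => -[z _ []].
Qed.

Lemma card_allw m (P : pred (seq bool)) :
  #|[set w : m.-tuple bool | P w]| = count P (allw m).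
Proof.
have pe : perm_eq (map val (enum {: m.-tuple bool})) (allw m).
  apply: uniq_perm; first by rewrite map_inj_uniq ?enum_uniq //; apply: val_inj.
    exact: allw_uniq.
  move=> s; rewrite allwP; apply/idP/idP => [/mapP[t _ ->]|/eqP H].
    by rewrite size_tuple.
  by apply/mapP; exists (Tuple (introT eqP H)); rewrite ?mem_enum.
rewrite -((permP pe) P) count_map cardsE cardE /enum_mem size_filter count_filter.
by apply: eq_count => x; rewrite !inE /= andbT.
Qed.


Definition p3 := [:: false; false; true].
Definition p2 := [:: false; true].

Lemma occ_cons x v p : occ (x :: v) p = (take (size p) (x :: v) == p) + occ v p.
Proof.
rewrite /occ /= -add1n iotaDl count_map /=.
by congr (_ + _); apply: eq_count => i /=; rewrite add1n.
Qed.

Definition cls (w : seq bool) : nat :=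
  match w with false :: false :: _ => 2 | false :: _ => 1 | _ => 0 end.

Definition Qs a b k l (w : seq bool) : bool :=
  [&& count_mem false w == a, count_mem true w == b, occ w p3 == k & occ w p2 == l].
Definition Q c a b k l w := Qs a b k l w && (cls w == c).

Lemma Qs_true a b k l v : Qs a b k l (true :: v) = (0 < b) && Qs a b.-1 k l v.
Proof.
rewrite /Qs !occ_cons /=; case: b => [|b] //=.
by rewrite andbF.
Qed.

Lemma Q0_false a b k l v : Q 0 a b k l (false :: v) = false.
Proof. by rewrite /Q; case: v => [|[] ?]; rewrite andbF. Qed.

Lemma Q0_true a b k l v : Q 0 a b k l (true :: v) = (0 < b) && Qs a b.-1 k l v.
Proof. by rewrite /Q Qs_true andbT. Qed.

Lemma Q1_true a b k l v : Q 1 a b k l (true :: v) = false.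
Proof. by rewrite /Q andbF. Qed.
Lemma Q2_true a b k l v : Q 2 a b k l (true :: v) = false.
Proof. by rewrite /Q andbF. Qed.

Lemma Q1_false a b k l v : Q 1 a b k l (false :: v) =
  (0 < a) && (if b is 0 then Q 0 a.-1 0 k l v else (0 < l) && Q 0 a.-1 b k l.-1 v).
Proof.
rewrite /Q /Qs; case: v => [|[] v] /=.
- by case: a => [|[|a]]; case: b => [|b]; case: l => [|l]; rewrite /= ?andbF.
- rewrite !occ_cons /= !add0n.
  rewrite take0 /=.
  by case: a => [|a]; case: b => [|b]; case: l => [|l]; rewrite /= ?andbF ?andbT ?add1n ?eqSS.
- by case: v => [|[] v]; case: b => [|b]; rewrite /= ?andbF.
Qed.

Lemma Q2_false a b k l v : (Q 2 a b k l (false :: v) : nat) =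
  (0 < a) * (Q 2 a.-1 b k l v +
     (if b is 0 then Q 1 a.-1 0 k l v else (0 < k) && Q 1 a.-1 b k.-1 l v)).
Proof.
rewrite /Q /Qs; case: v => [|[] v].
- by case: b => [|b]; rewrite /= !andbF ?muln0.
- by case: b => [|b]; rewrite /= !andbF ?muln0.
case: v => [|[] v].
- by case: a => [|[|[|a]]]; case: b => [|b]; case: k => [|k]; case: l => [|l].
- rewrite !occ_cons /= ?take0 /=.
  by case: a => [|[|a]]; case: b => [|b]; case: k => [|k]; case: l => [|l];
    rewrite /= ?andbF ?andbT ?add1n ?addn1 ?eqSS ?addn0 ?muln0 ?mul1n.
- rewrite (occ_cons false (false :: false :: v)) (occ_cons false (false :: false :: v)) /=.
  by case: a => [|a]; case: b => [|b]; rewrite /= ?andbF ?andbT ?add1n ?addn0 ?muln0 ?mul1n ?add0n.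
Qed.


Lemma count_lin T (c : nat) (p q r : pred T) s :
  (forall x, (p x : nat) = c * (q x + r x)) -> count p s = c * (count q s + count r s).
Proof.
move=> H; elim: s => [|x s IH] /=; first by rewrite muln0.
by rewrite IH H !mulnDr; lia.
Qed.

Lemma count_allwS (P : pred (seq bool)) m :
  count P (allw m.+1) = count (fun v => P (false :: v)) (allw m) +
                        count (fun v => P (true :: v)) (allw m).
Proof. by rewrite /= count_cat !count_map. Qed.

Definition N c a b k l m := count (Q c a b k l) (allw m).
Definition Ns a b k l m := count (Qs a b k l) (allw m).

Lemma Ns_split a b k l m : Ns a b k l m = N 0 a b k l m + N 1 a b k l m + N 2 a b k l m.
Proof.
rewrite /Ns /N -count_predUI.
have -> : count (predI (Q 0 a b k l) (Q 1 a b k l)) (allw m) = 0.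
  apply/eqP; rewrite -leqn0 leqNgt -has_count; apply/hasPn => w _ /=.
  rewrite /Q; case: (cls w) => [|[|?]]; rewrite ?andbF //.
rewrite addn0 -count_predUI.
have -> : count (predI (predU (Q 0 a b k l) (Q 1 a b k l)) (Q 2 a b k l)) (allw m) = 0.
  apply/eqP; rewrite -leqn0 leqNgt -has_count; apply/hasPn => w _ /=.
  rewrite /Q; case: (cls w) => [|[|[|?]]]; rewrite ?andbF ?orbF //.
rewrite addn0; apply: eq_count => w /=; rewrite /Q -!andb_orr.
have : cls w < 3 by case: w => [|[] [|[] ?]].
by case: (cls w) => [|[|[|?]]] //; rewrite ?orbF ?andbT.
Qed.

Definition Sf a b k l := 'C(b, l) * 'C(l, k) * 'C(a - l, k) * (l <= a).
Definition G0 a b k l : nat :=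
  if b is b'.+1 then Sf a b' k l else [&& a == 0, k == 0 & l == 0].
Definition G1 a b k l : nat :=
  if a is a'.+1 then
    (if b is 0 then [&& a' == 0, k == 0 & l == 0] : nat
     else if l is l'.+1 then Sf a' b.-1 k l' else 0)
  else 0.
Definition G2 a b k l : nat :=
  if b is b'.+1 then
    (if k is k'.+1 then if l is l'.+1 then 'C(b', l') * 'C(l', k') * 'C(a - l, k) else 0 else 0)
  else [&& 1 < a, k == 0 & l == 0].

Lemma Gsum a b k l : G0 a b k l + G1 a b k l + G2 a b k l = Sf a b k l.
Proof.
rewrite /G0 /G1 /G2 /Sf; case: b => [|b].
  case: a => [|[|a]]; case: k => [|k]; case: l => [|l]; rewrite /= ?bin0 ?bin0n //.
case: l => [|l].
  by case: a => [|a]; case: k => [|k]; rewrite /= ?bin0 ?addn0.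
case: a => [|a].
  by case: k => [|k]; rewrite /= ?muln0 ?addn0 // sub0n bin0n muln0.
rewrite /= subSS ltnS.
case: (leqP l a) => H; last first.
  have -> : a - l = 0 by apply/eqP; rewrite subn_eq0 ltnW.
  by case: k => [|k]; rewrite ?muln0 ?addn0 ?bin0n ?muln0.
rewrite !muln1; case: k => [|k].
  by rewrite !bin0 !muln1 addn0 [in RHS]binS addnC.
rewrite (binS b l) (binS l k).
ring.
Qed.

Lemma count_mulb T (c : bool) (p q : pred T) s :
  (forall x, p x = c && q x) -> count p s = c * count q s.
Proof.
move=> H; rewrite (@count_lin T c p q pred0 s) ?count_pred0 ?addn0 // => x.
by rewrite H addn0; case: c {H}; rewrite ?mul1n.
Qed.

Lemma count0 T (p : pred T) s : (forall x, p x = false) -> count p s = 0.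
Proof. by move=> H; rewrite (eq_count H) count_pred0. Qed.

Lemma Nmain m : forall a b k l,
  [/\ N 0 a b k l m = (a + b == m) * G0 a b k l,
      N 1 a b k l m = (a + b == m) * G1 a b k l &
      N 2 a b k l m = (a + b == m) * G2 a b k l].
Proof.
elim: m => [|m IH] a b k l.
  rewrite /N /= /Q /Qs /occ /= /G0 /G1 /G2.
  by case: a => [|[|[|a]]]; case: b => [|b]; case: k => [|k]; case: l => [|l].
split.
- rewrite /N count_allwS (@count0 _ _ _ (fun v => Q0_false _ _ _ _ v)) add0n.
  rewrite (@count_mulb _ (0 < b) _ (Qs a b.-1 k l) _ (fun v => Q0_true a b k l v)) -/(Ns a b.-1 k l m).
  rewrite Ns_split; case: (IH a b.-1 k l) => -> -> ->; rewrite -!mulnDr Gsum /G0.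
  case: b => [|b] /=; last by rewrite mul1n addnS eqSS.
  by rewrite mul0n; case: a => [|a]; rewrite /= ?muln0.
- rewrite /N count_allwS (@count0 _ _ _ (fun v => Q1_true a b k l v)) addn0.
  case: b => [|b].
    rewrite (@count_mulb _ (0 < a) _ (Q 0 a.-1 0 k l) _ (fun v => Q1_false a 0 k l v)).
    case: (IH a.-1 0 k l) => H0 _ _; rewrite /N in H0; rewrite H0 {H0}; rewrite /G0 /G1.
    by case: a => [|a]; rewrite /= ?mul0n ?mul1n ?addn0 ?eqSS.
  rewrite (@count_mulb _ ((0 < a) && (0 < l)) _ (Q 0 a.-1 b.+1 k l.-1) _ (fun v => etrans (Q1_false a b.+1 k l v) (andbA _ _ _))).
  case: (IH a.-1 b.+1 k l.-1) => H0 _ _; rewrite /N in H0; rewrite H0 {H0}; rewrite /G0 /G1.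
  by case: a => [|a]; case: l => [|l]; rewrite /= ?mul0n ?muln0 ?mul1n ?addSn ?eqSS.
- rewrite /N count_allwS (@count0 _ _ _ (fun v => Q2_true a b k l v)) addn0.
  rewrite (@count_lin _ (0 < a) _ (Q 2 a.-1 b k l) (if b is 0 then Q 1 a.-1 0 k l else predI (fun _ => 0 < k) (Q 1 a.-1 b k.-1 l)) _ (fun v => etrans (Q2_false a b k l v) _)); last by case: b.
  case: (IH a.-1 b k l) => _ _ H0; rewrite /N in H0; rewrite H0 {H0}.
  case: b => [|b].
    case: (IH a.-1 0 k l) => _ H0 _; rewrite /N in H0; rewrite H0 {H0} /G1 /G2.
    by case: a => [|[|[|a]]]; case: k => [|k]; case: l => [|l]; rewrite /= ?mul0n ?muln0 ?mul1n ?addn0 ?eqSS.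
  rewrite (@count_mulb _ (0 < k) _ (Q 1 a.-1 b.+1 k.-1 l) _ (fun v => erefl)).
  case: (IH a.-1 b.+1 k.-1 l) => _ H0 _; rewrite /N in H0; rewrite H0 {H0}.
  case: a => [|a].
    by rewrite mul0n /G2; case: k => [|k]; case: l => [|l]; rewrite ?muln0 // sub0n bin0n muln0.
  rewrite /= mul1n addSn eqSS mulnCA -mulnDr; congr (_ * _).
  rewrite /G1 /G2 /Sf; case: k => [|k]; case: l => [|l]; rewrite /= ?mul0n ?muln0 ?addn0 //.
    by case: a.
  rewrite mul1n subSS; case: a => [|a].
    by rewrite !sub0n !addn0.
  rewrite subSS; case: (leqP l a) => H.
    rewrite muln1 subSn // binS; ring.
  have -> : a.+1 - l = 0 by apply/eqP; rewrite subn_eq0.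
  have -> : a - l = 0 by apply/eqP; rewrite subn_eq0 ltnW.
  by rewrite !bin0n !muln0.
Qed.


Lemma keyfact n k l : k <= l -> l + k <= n ->
  Sf n n k l * (k`! ^ 2 * (l - k)`! * (n - k - l)`!) = n`!
  /\ 'C(n, 2 * k) * 'C(2 * k, k) * 'C(n - 2 * k, l - k) * (k`! ^ 2 * (l - k)`! * (n - k - l)`!) = n`!.
Proof.
move=> Hkl Hlk.
have Hln : l <= n by lia.
have e1 := bin_fact Hln.
have e2 := bin_fact Hkl.
have H3 : k <= n - l by lia.
have e3 := bin_fact H3.
have f1 := @bin_fact n (2 * k) ltac:(lia).
have f2 := @bin_fact (2 * k) k ltac:(lia).
have f3 := @bin_fact (n - 2 * k) (l - k) ltac:(lia).
have -> : n - k - l = n - l - k by lia.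
rewrite (_ : 2 * k - k = k) in f2; last by lia.
rewrite (_ : n - 2 * k - (l - k) = n - l - k) in f3; last by lia.
split.
  rewrite /Sf Hln muln1 -e1 -e3 -e2; ring.
rewrite -f1 -f2 -f3; ring.
Qed.

Lemma key n k l : Sf n n k l = 'C(n, 2 * k) * 'C(2 * k, k) * ('C(n - 2 * k, l - k) * (k <= l)).
Proof.
case: (ltnP l k) => Hlk.
  by rewrite /Sf (bin_small Hlk) !muln0 !mul0n.
case: (ltnP n (l + k)) => Hn.
  case: (ltnP n (2 * k)) => H2.
    rewrite (bin_small H2) !mul0n /Sf.
    case: (leqP l n) => Hln; last by rewrite muln0.
    have Hs : n - l < k by lia.
    by rewrite (bin_small Hs) !muln0 !mul0n.
  have Hs : n - 2 * k < l - k by lia.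
  rewrite (bin_small Hs) mul0n muln0 /Sf.
  case: (leqP l n) => Hln; last by rewrite muln0.
  have Hs' : n - l < k by lia.
  by rewrite (bin_small Hs') !muln0 !mul0n.
have [A B] := keyfact Hlk Hn.
have D0 : 0 < k`! ^ 2 * (l - k)`! * (n - k - l)`! by rewrite !muln_gt0 !fact_gt0.
apply/eqP; rewrite -(eqn_pmul2r D0) A muln1 B eqxx.
by [].
Qed.


Lemma binz_eq n k l : 2 * k <= n ->
  binz (n%:Z - (2 * k)%:Z)%R (l%:Z - k%:Z)%R = 'C(n - 2 * k, l - k) * (k <= l).
Proof.
move=> H; rewrite (subzn H).
case: (leqP k l) => Hkl.
  rewrite (subzn Hkl) muln1.
  reflexivity.
have -> : (l%:Z - k%:Z)%R = Negz (k - l).-1.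
  rewrite NegzE prednK ?subn_gt0 //.
  by rewrite -(subzn (ltnW Hkl)) GRing.opprB.
rewrite muln0; reflexivity.
Qed.

Lemma Ns_val n k l : Ns n n k l (2 * n) = Sf n n k l.
Proof.
rewrite Ns_split; case: (Nmain (2 * n) n n k l) => -> -> ->.
by rewrite -!mulnDr Gsum mul2n -addnn eqxx mul1n.
Qed.

Lemma card_l n k l :
  #|[set w : (2 * n).-tuple bool | [&& inG w, occ w [:: false; false; true] == k
                                      & occ w [:: false; true] == l]]| = Sf n n k l.
Proof.
rewrite -Ns_val /Ns -card_allw; apply: eq_card => w; rewrite !inE /inG /Qs.
by rewrite -!andbA.
Qed.

Lemma count_sum (T : eqType) (P : pred T) (f : T -> nat) B s :
  (forall x, x \in s -> f x < B) ->
  count P s = \sum_(l < B) count (fun x => P x && (f x == l)) s.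
Proof.
elim: s => [|x s IH] H /=; first by rewrite big1.
rewrite big_split /= -IH; last by move=> y Hy; apply: H; rewrite inE Hy orbT.
congr (_ + _).
have Hx : f x < B by apply: H; rewrite inE eqxx.
rewrite (bigD1 (Ordinal Hx)) //= eqxx andbT big1 ?addn0 // => i Hi.
case: eqP; rewrite ?andbF // => E.
have Ei : i = Ordinal Hx by apply: val_inj; rewrite /= E.
by rewrite Ei eqxx in Hi.
Qed.

Lemma sum_bin N k B : N + k < B -> \sum_(l < B) 'C(N, l - k) * (k <= l) = 2 ^ N.
Proof.
move=> H.
have HkB : k <= B by apply: leq_trans (ltnW H); apply: leq_addl.
rewrite -(big_mkord xpredT (fun l => 'C(N, l - k) * (k <= l))) (@big_cat_nat _ _ _ k) //=.
rewrite big_nat big1 ?add0n; last first.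
  move=> i /andP[_ Hi]; rewrite leqNgt Hi muln0 //.
have := @big_addn nat 0 addn 0 B k xpredT (fun i => 'C(N, i - k) * (k <= i)).
rewrite add0n => ->.
rewrite (eq_bigr (fun i => 'C(N, i))); last by move=> i _; rewrite addnK leq_addl muln1.
have HN : N.+1 <= B - k by rewrite ltn_subRL addnC.
rewrite (@big_cat_nat _ _ _ N.+1) //=.
have Z : \sum_(N.+1 <= i < B - k) 'C(N, i) = 0.
  by rewrite big_nat big1 // => i /andP[Hi _]; rewrite bin_small.
rewrite Z addn0.
rewrite big_mkord.
have := expnDn 1 1 N; rewrite addnn -mul2n muln1 => ->.
by apply: eq_bigr => i _; rewrite !exp1n !muln1.
Qed.

Unset Implicit Arguments.

Theorem corollary3p5 (n k l : nat) :
  #|[set w : (2 * n).-tuple bool | inG w && (occ w [:: false; false; true] == k)]|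
    = 'C(n, 2 * k) * 'C(2 * k, k) * 2 ^ (n - 2 * k)
  /\
  #|[set w : (2 * n).-tuple bool | [&& inG w, occ w [:: false; false; true] == k
                                      & occ w [:: false; true] == l]]|
    = 'C(n, 2 * k) * 'C(2 * k, k)
      * binz (n%:Z - (2 * k)%:Z)%R (l%:Z - k%:Z)%R
  /\
  (k <= l <= n - k ->
   #|[set w : (2 * n).-tuple bool | [&& inG w, occ w [:: false; false; true] == k
                                       & occ w [:: false; true] == l]]|
     = n`! %/ (k`! ^ 2 * (l - k)`! * (n - k - l)`!)).
Proof.
split; last split.
- transitivity (count (fun s => [&& count_mem false s == n, count_mem true s == n & occ s p3 == k]) (allw (2 * n))).
    rewrite -card_allw; apply: eq_card => w; rewrite !inE /inG.
    by rewrite -!andbA.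
  rewrite (@count_sum _ _ (fun s => occ s p2) (2 * n).+1); last first.
      move=> x; rewrite allwP => /eqP Hx; rewrite ltnS -Hx /occ.
      by apply: leq_trans (count_size _ _) _; rewrite size_iota.
    rewrite (eq_bigr (fun l : 'I_(2 * n).+1 => Sf n n k l)); last first.
      move=> i _; rewrite -Ns_val /Ns; apply: eq_count => s; rewrite /Qs.
      by rewrite -!andbA.
    case: (leqP (2 * k) n) => H2.
      rewrite (eq_bigr (fun l : 'I_(2 * n).+1 => 'C(n, 2 * k) * 'C(2 * k, k) * ('C(n - 2 * k, l - k) * (k <= l)))); last by move=> i _; rewrite key.
      by rewrite -big_distrr /= sum_bin //; lia.
  by rewrite (bin_small H2) !mul0n big1 // => i _; rewrite key (bin_small H2) !mul0n.
- rewrite card_l key; case: (leqP (2 * k) n) => H2; first by rewrite binz_eq.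
  by rewrite (bin_small H2) !mul0n.
- move=> /andP[H1 H2]; rewrite card_l.
  have H3 : l + k <= n by lia.
  have [A _] := keyfact H1 H3.
  by rewrite -A mulnK // !muln_gt0 !fact_gt0.
Qed.
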